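(* Let $m$ be an even non-negative integer and let $d_2$ be an $(m+3)\times(m+3)$ alternating matrix over a commutative ring, partitioned as $d_2=\begin{bmatrix}\varphi&\psi^T\\-\psi&\Phi\end{bmatrix}$ with $\varphi$ an $m\times m$ alternating matrix, $\Phi$ a $3\times3$ alternating matrix, and $\psi$ a $3\times m$ matrix. Then for each $\ell\in\{1,2,3\}$, $$\operatorname{Pf}_{m+\ell}(d_2)=\operatorname{Pf}_\ell(\psi\check\varphi\psi^T)+\operatorname{Pf}(\varphi)\operatorname{Pf}_\ell(\Phi).$$
   Context: An $s\times s$ matrix is alternating if it is skew-symmetric with zero diagonal. $\operatorname{Pf}$ is the Pfaffian ($0$ for odd size, $1$ for the empty matrix). For an odd-size alternating $\varphi$, $\operatorname{Pf}_\ell(\varphi)=(-1)^{\ell+1}\operatorname{Pf}(\varphi$ with row and column $\ell$ deleted$)$. For an even-size alternating $\varphi$, $\check\varphi$ is the alternating matrix with $(\check\varphi)_{i,j}=(-1)^{i+j}\operatorname{Pf}(\varphi$ with rows and columns $i,j$ deleted$)$ for $i<j$, zero diagonal, and $(\check\varphi)_{j,i}=-(\check\varphi)_{i,j}$ (when $m=0$, $\check\varphi$ is empty and the first term is $0$). *)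

(* Defs.v *)
From HB Require Import structures.
From mathcomp Require Import all_boot all_order all_algebra.
Set Implicit Arguments. Unset Strict Implicit. Unset Printing Implicit Defensive.
Import Order.TTheory GRing.Theory Num.Theory.
Local Open Scope ring_scope.

Section Pfaffian.
Variable R : comPzRingType.

(* The empty list gives 1, a list of odd length gives 0.  The nat argument is
   fuel (size s suffices). *)
Fixpoint pf_fuel (T : Type) (A : T -> T -> R) (n : nat) (s : seq T) : R :=
  match s, n with
  | [::], _ => 1
  | _ :: _, 0%N => 0
  | i :: t, n'.+1 =>
      \sum_(k < size t)
        (-1) ^+ k * A i (nth i t k) * pf_fuel A n' (take k t ++ drop k.+1 t)
  end.

Definition pf_seq (T : Type) (A : T -> T -> R) (s : seq T) : R :=
  pf_fuel A (size s) s.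

Definition alternating (n : nat) (M : 'M[R]_n) : Prop :=
  (forall i j, M j i = - M i j) /\ (forall i, M i i = 0).

Definition Pf (n : nat) (M : 'M[R]_n) : R := pf_seq (fun i j => M i j) (enum 'I_n).

Definition Pf_del (n : nat) (M : 'M[R]_n) (S : seq 'I_n) : R :=
  pf_seq (fun i j => M i j) [seq i <- enum 'I_n | i \notin S].

(* Pf_l(M) = (-1)^(l+1) Pf(M with row/column l deleted), where l = i.+1 is the
   1-based index of the 0-based ordinal i. *)
Definition Pfl (n : nat) (M : 'M[R]_n) (i : 'I_n) : R :=
  (-1) ^+ (i.+1).+1 * Pf_del M [:: i].

(* check(M)_{ij} = (-1)^(i+j) Pf(M with rows/cols i,j deleted) for i<j,
   zero diagonal, skew-symmetric.  (Shifting to 0-based indices does not change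
   the parity of i+j.) *)
Definition pf_check (n : nat) (M : 'M[R]_n) : 'M[R]_n :=
  \matrix_(i, j)
    if (i < j)%N then (-1) ^+ (i + j) * Pf_del M [:: i; j]
    else if (j < i)%N then - ((-1) ^+ (j + i) * Pf_del M [:: j; i])
    else 0.

End Pfaffian.

(* Main.v *)
Require Import Defs.
From HB Require Import structures.
From mathcomp Require Import all_boot all_order all_algebra.
From Stdlib Require Import Lia.
Set Implicit Arguments. Unset Strict Implicit. Unset Printing Implicit Defensive.
Import GRing.Theory.
Local Open Scope ring_scope.

Ltac nlia := intros;
  repeat (match goal with H : is_true (leq _ _) |- _ => move/leP: H => H end);
  try (apply/leP);
  repeat (match goal with H : context [predn _] |- _ => rewrite -subn1 in H end);
  repeat (match goal with H : context [subn _ _] |- _ => rewrite -minusE in H end);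
  repeat (match goal with H : context [addn _ _] |- _ => rewrite -plusE in H end);
  rewrite -?subn1 -?plusE -?minusE; lia.

Section H.
Variable R : comPzRingType.

Fixpoint Pn (n : nat) (B : nat -> nat -> R) {struct n} : R :=
  match n with
  | 0 => 1
  | S 0 => 0
  | S (S n') => \sum_(k < n'.+1) (-1) ^+ k * B 0%N k.+1 *
        Pn n' (fun a b => B (bump k a).+1 (bump k b).+1)
  end.

Lemma bump_le k a : (bump k a <= a.+1)%N.
Proof. by rewrite /bump; case: (k <= a)%N. Qed.

Lemma Pn_ext_lt n B B' : (forall a b, (a < n)%N -> (b < n)%N -> B a b = B' a b) ->
  Pn n B = Pn n B'.
Proof.
elim/ltn_ind: n B B' => n IH B B' hB.
case: n IH hB => [|[|n]] IH hB //=.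
apply: eq_bigr => i _; rewrite hB //; last by rewrite ltnS ltn_ord.
congr (_ * _); apply: IH => [|a b ha hb]; first by rewrite ltnW.
apply: hB; rewrite ltnS; by apply: leq_ltn_trans (bump_le _ _) _; rewrite ltnS ?ha ?hb.
Qed.

Lemma nth_rm T (x0 : T) t k a : (k < size t)%N ->
  nth x0 (take k t ++ drop k.+1 t) a = nth x0 t (bump k a).
Proof.
move=> hk; rewrite nth_cat size_take hk /bump.
case: ltnP => ha.
  by rewrite nth_take.
by rewrite nth_drop add1n addSn subnKC.
Qed.

Lemma size_rm T (t : seq T) k : (k < size t)%N -> size (take k t ++ drop k.+1 t) = (size t).-1.
Proof.
move=> hk; rewrite size_cat size_take hk size_drop.
by case: (size t) hk => // n; rewrite ltnS => hk; rewrite subSS subnKC.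
Qed.

Lemma pf_fuel_Pn T (A : T -> T -> R) (x0 : T) f s : (size s <= f)%N ->
  pf_fuel A f s = Pn (size s) (fun a b => A (nth x0 s a) (nth x0 s b)).
Proof.
elim: f s => [|f IH] [|i t] //= hs.
case: t hs => [|j t] hs; first by rewrite big_ord0.
apply: eq_bigr => k _.
rewrite (set_nth_default x0 i) //; congr (_ * _); rewrite -/(size t).
rewrite IH; last by rewrite size_rm // ltnW.
rewrite size_rm //; apply: Pn_ext_lt => a b _ _.
by rewrite !(nth_rm _ _ (ltn_ord k)).
Qed.

Arguments Pn : simpl never.
Lemma Pn0 B : Pn 0 B = 1. Proof. by []. Qed.

Lemma sum_bump N k (G : nat -> R) : (k < N.+1)%N ->
  \sum_(i < N) G (bump k i) + G k = \sum_(j < N.+1) G j.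
Proof.
elim: N k => [|N IH] k hk.
  by move: hk; rewrite ltnS leqn0 => /eqP ->; rewrite big_ord0 big_ord1 add0r.
case: (ltngtP k N.+1) hk => h hk.
- rewrite big_ord_recr /= [RHS]big_ord_recr /=.
  have -> : bump k N = N.+1 by rewrite /bump -ltnS h.
  by rewrite addrAC IH.
- by rewrite ltnS leqNgt h in hk.
- rewrite h [RHS]big_ord_recr /= ; congr (_ + _); apply: eq_bigr => i _.
  by rewrite /bump leqNgt ltn_ord.
Qed.

Lemma sum_pairs N (F : nat -> nat -> R) :
  \sum_(k < N.+1) \sum_(i < N) F k (bump k i) =
  \sum_(j < N.+1) \sum_(k < N) F (bump j k) j.
Proof.
have h1 k : (k < N.+1)%N -> \sum_(i < N) F k (bump k i) = \sum_(j < N.+1) F k j - F k k.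
  by move=> hk; rewrite -(sum_bump (F k) hk) addrK.
have h2 j : (j < N.+1)%N -> \sum_(k < N) F (bump j k) j = \sum_(k < N.+1) F k j - F j j.
  by move=> hj; rewrite -(sum_bump (F^~ j) hj) addrK.
rewrite (eq_bigr _ (fun (k : 'I_N.+1) _ => h1 k (ltn_ord k))).
rewrite [RHS](eq_bigr _ (fun (j : 'I_N.+1) _ => h2 j (ltn_ord j))).
by rewrite !sumrB exchange_big.
Qed.

Lemma Pn_unfold n D : Pn n.+1 D =
  \sum_(k < n) (-1) ^+ k * D 0%N k.+1 * Pn n.-1 (fun a b => D (bump k a).+1 (bump k b).+1).
Proof. by case: n => [|n]; rewrite ?big_ord0. Qed.

Lemma sign_eq x y : odd x = odd y -> (-1) ^+ x = (-1) ^+ y :> R.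
Proof. by move=> h; rewrite -signr_odd h signr_odd. Qed.

Lemma unbump_bump_swap k i : unbump (bump k i) k = unbump i k.
Proof.
rewrite /unbump /bump; case: (leqP k i) => h //=.
  by rewrite add1n ltnNge (leqW h).
by rewrite add0n h.
Qed.

Lemma ring5' (a b c d e : R) : a * b * (c * d * e) = (a * c) * d * b * e.
Proof. by rewrite !mulrA [a * b * c]mulrAC [a * c * b * d]mulrAC. Qed.

Lemma odd_plus2 x y : (x + 2 = y)%N -> odd x = odd y.
Proof. by move<-; rewrite oddD addbF. Qed.

Lemma odd_plus4 x y : (x + 4 = y)%N -> odd x = odd y.
Proof. by move<-; rewrite oddD addbF. Qed.

Lemma bump0 j : bump 0 j = j.+1.
Proof. by rewrite /bump add1n. Qed.

Lemma ring5 (a b c d e : R) : a * b * (c * d * e) = (a * c) * b * d * e.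
Proof. by rewrite !mulrA [a * b * c]mulrAC. Qed.

Lemma Pn_last n B : Pn n.+1 B =
  \sum_(i < n) (-1) ^+ (i + n.+1) * B i n * Pn n.-1 (fun a b => B (bump i a) (bump i b)).
Proof.
elim/ltn_ind: n B => n IH B.
case: n IH => [|[|n0]] IH; first by rewrite big_ord0.
  by rewrite big_ord1 Pn_unfold big_ord1 !Pn0 expr0 mul1r !mulr1 add0n expr2 mulrNN !mul1r.
rewrite Pn_unfold big_ord_recr /= [RHS]big_ord_recl /= addrC; congr (_ + _).
  rewrite add0n !exprS !mulN1r opprK; congr (_ * _); apply: Pn_ext_lt => a b ha hb.
  by rewrite /bump !add1n leqNgt ha leqNgt hb.
pose F a b := (-1) ^+ (a + b + n0 + (b < a)%N) * B 0%N a.+1 * B b.+1 n0.+2 *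
  Pn n0.-1 (fun x y => B (bump b (bump (unbump b a) x)).+1 (bump b (bump (unbump b a) y)).+1).
transitivity (\sum_(k < n0.+1) \sum_(i < n0) F k (bump k i)).
  apply: eq_bigr => k _; rewrite IH // big_distrr /=; apply: eq_bigr => i _.
  rewrite ring5 /F -exprD.
  have -> : bump k n0 = n0.+1 by rewrite /bump -ltnS ltn_ord.
  congr (_ * _ * _ * _).
    apply: sign_eq; congr odd; rewrite /bump; case: (leqP k i) => h.
      by rewrite add1n ltnNge (leqW h) /= !(addn0, addnS, addSn, addn1, addnA).
    by rewrite add0n h /= !(addn0, addnS, addSn, addn1, addnA).
  apply: Pn_ext_lt => x y _ _.
  by rewrite [bump k (bump i x)]bumpC [bump k (bump i y)]bumpC unbump_bump_swap.
rewrite sum_pairs; apply: eq_bigr => j _.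
rewrite Pn_unfold big_distrr /=; apply: eq_bigr => k _.
rewrite ring5' -exprD /F !bump0 bumpS.
have -> : bump j.+1 0 = 0%N by [].
congr (_ * _ * _ * _).
  apply: sign_eq; rewrite /bump; case: (leqP j k) => h.
    apply: odd_plus2; rewrite add1n ltnS h !addnE /=; lia.
  apply: odd_plus4; rewrite add0n ltnNge (ltnW h) !addnE /=; lia.
apply: Pn_ext_lt => x y _ _.
by rewrite bumpK !bumpS.
Qed.

Lemma Pn_last2 m B : Pn m.+2 B = B m m.+1 * Pn m B +
  \sum_(i < m) \sum_(j < m.-1) (-1) ^+ (i + j) * B i m.+1 * B (bump i j) m *
     Pn m.-2 (fun a b => B (bump i (bump j a)) (bump i (bump j b))).
Proof.
rewrite Pn_last big_ord_recr /= addrC; congr (_ + _).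
  rewrite (@sign_eq _ 0); last by rewrite !addnS /= addnn odd_double.
  rewrite expr0 mul1r; congr (_ * _); apply: Pn_ext_lt => a b ha hb.
  by rewrite /bump leqNgt ha leqNgt hb.
case: m => [|m1]; first by rewrite !big_ord0.
apply: eq_bigr => i _; rewrite Pn_last big_distrr; apply: eq_bigr => j _ /=.
have -> : bump i m1 = m1.+1 by rewrite /bump -ltnS ltn_ord.
rewrite ring5 -exprD; congr (_ * _ * _ * _).
apply: sign_eq.
have -> : (i + m1.+3 + (j + m1.+1) = i + j + (m1.+2 + m1.+2))%N by rewrite !addnE; lia.
by rewrite oddD addnn odd_double addbF.
Qed.



Definition ordf (n1 n2 : nat) (M : 'M[R]_(n1, n2)) (a b : nat) : R :=
  match (insub a : option 'I_n1), (insub b : option 'I_n2) with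
  | Some i, Some j => M i j | _, _ => 0 end.

Lemma ordfE n1 n2 (M : 'M[R]_(n1, n2)) (i : 'I_n1) (j : 'I_n2) : ordf M i j = M i j.
Proof. by rewrite /ordf !valK. Qed.

Lemma nth_enumE n (c : 'I_n) x (hx : (x < n)%N) : nth c (enum 'I_n) x = Ordinal hx.
Proof. by apply: val_inj; rewrite /= nth_enum_ord. Qed.

Lemma filter_notin (T : eqType) (x : T) t : x \notin t -> filter (predC1 x) t = t.
Proof. by move=> h; apply/all_filterP/allP => y hy /=; apply/eqP => e; rewrite -e hy in h. Qed.

Lemma filter_rm (T : eqType) (x0 : T) s k : uniq s -> (k < size s)%N ->
  filter (predC1 (nth x0 s k)) s = take k s ++ drop k.+1 s.
Proof.
move=> hu hk.
have hs := cat_take_drop k s; rewrite (drop_nth x0 hk) in hs.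
move: hu; rewrite -{1 3}hs filter_cat /= eqxx /= cat_uniq /= => /and4P [_ h1 h2 _].
rewrite !filter_notin //; apply: contra h1 => h /=.
by rewrite h.
Qed.

Lemma Pf_Pn n (M : 'M[R]_n) : Pf M = Pn n (ordf M).
Proof.
case: n M => [|n] M.
  rewrite /Pf /pf_seq.
  by have -> : enum 'I_0 = [::] by apply: size0nil; rewrite size_enum_ord.
rewrite /Pf /pf_seq (pf_fuel_Pn _ ord0) // size_enum_ord; apply: Pn_ext_lt => a b ha hb.
by rewrite (nth_enumE ord0 ha) (nth_enumE ord0 hb) -(ordfE M (Ordinal ha) (Ordinal hb)).
Qed.

Lemma Pf_del1 n (M : 'M[R]_n) (c : 'I_n) :
  Pf_del M [:: c] = Pn n.-1 (fun a b => ordf M (bump c a) (bump c b)).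
Proof.
have hc := ltn_ord c.
rewrite /Pf_del /pf_seq.
have -> : [seq i <- enum 'I_n | i \notin [:: c]] = take c (enum 'I_n) ++ drop c.+1 (enum 'I_n).
  rewrite -(filter_rm c (enum_uniq _)) ?size_enum_ord // nth_ord_enum.
  by apply: eq_filter => i; rewrite !inE.
rewrite (pf_fuel_Pn _ c) // size_rm ?size_enum_ord //; apply: Pn_ext_lt => a b ha hb.
rewrite !nth_rm ?size_enum_ord //.
have hxa : (bump c a < n)%N by have := bump_le c a; nlia.
have hxb : (bump c b < n)%N by have := bump_le c b; nlia.
by rewrite (nth_enumE c hxa) (nth_enumE c hxb) -(ordfE M (Ordinal hxa) (Ordinal hxb)).
Qed.

Lemma Pf_del2 n (M : 'M[R]_n) (p q : 'I_n) : (p < q)%N ->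
  Pf_del M [:: p; q] =
  Pn n.-2 (fun a b => ordf M (bump p (bump q.-1 a)) (bump p (bump q.-1 b))).
Proof.
move=> hpq; have hq := ltn_ord q.
rewrite /Pf_del /pf_seq.
set e := enum 'I_n.
have he : size e = n by rewrite size_enum_ord.
have E1 : filter (predC1 p) e = take p e ++ drop p.+1 e.
  by rewrite -(filter_rm p (enum_uniq _)) ?he // nth_ord_enum.
set e1 := take p e ++ drop p.+1 e.
have he1 : size e1 = n.-1 by rewrite size_rm he.
have hq1 : (q.-1 < size e1)%N by rewrite he1; nlia.
have hbq : bump p q.-1 = q.
  have h : (p <= q.-1)%N by nlia.
  by rewrite /bump h add1n; nlia.
have E2 : filter (predC1 q) e1 = take q.-1 e1 ++ drop q.-1.+1 e1.
  rewrite -(filter_rm p _ hq1); last by rewrite /e1 -E1 filter_uniq // enum_uniq.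
  by rewrite nth_rm ?he // hbq nth_ord_enum.
have -> : [seq i <- e | i \notin [:: p; q]] = take q.-1 e1 ++ drop q.-1.+1 e1.
  rewrite -E2 /e1 -E1 -filter_predI; apply: eq_filter => i.
  by rewrite !inE negb_or andbC.
rewrite (pf_fuel_Pn _ p) // size_rm // he1; apply: Pn_ext_lt => a b ha hb.
rewrite !nth_rm ?he //.
have hxa : (bump p (bump q.-1 a) < n)%N.
  by have := bump_le q.-1 a; have := bump_le p (bump q.-1 a); nlia.
have hxb : (bump p (bump q.-1 b) < n)%N.
  by have := bump_le q.-1 b; have := bump_le p (bump q.-1 b); nlia.
by rewrite (nth_enumE p hxa) (nth_enumE p hxb) -(ordfE M (Ordinal hxa) (Ordinal hxb)).
Qed.

Lemma Pn2 B : Pn 2 B = B 0%N 1%N.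
Proof. by rewrite Pn_unfold big_ord1 Pn0 expr0 mul1r mulr1. Qed.

Lemma ordf_ul m1 m2 n1 n2 (A : 'M[R]_(m1, n1)) (B : 'M[R]_(m1, n2)) (C : 'M[R]_(m2, n1))
  (D : 'M[R]_(m2, n2)) a b (ha : (a < m1)%N) (hb : (b < n1)%N) :
  ordf (block_mx A B C D) a b = A (Ordinal ha) (Ordinal hb).
Proof.
by rewrite -[ordf _ a b]/(ordf (block_mx A B C D) (lshift m2 (Ordinal ha)) (lshift n2 (Ordinal hb))) ordfE block_mxEul.
Qed.

Lemma ordf_ur m1 m2 n1 n2 (A : 'M[R]_(m1, n1)) (B : 'M[R]_(m1, n2)) (C : 'M[R]_(m2, n1))
  (D : 'M[R]_(m2, n2)) a (c : 'I_n2) (ha : (a < m1)%N) :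
  ordf (block_mx A B C D) a (n1 + c) = B (Ordinal ha) c.
Proof.
by rewrite -[ordf _ a _]/(ordf (block_mx A B C D) (lshift m2 (Ordinal ha)) (rshift n1 c)) ordfE block_mxEur.
Qed.

Lemma ordf_dr m1 m2 n1 n2 (A : 'M[R]_(m1, n1)) (B : 'M[R]_(m1, n2)) (C : 'M[R]_(m2, n1))
  (D : 'M[R]_(m2, n2)) (c : 'I_m2) (d : 'I_n2) :
  ordf (block_mx A B C D) (m1 + c) (n1 + d) = D c d.
Proof.
by rewrite -[ordf _ _ _]/(ordf (block_mx A B C D) (rshift m1 c) (rshift n1 d)) ordfE block_mxEdr.
Qed.

Lemma chk_entry m (phi : 'M[R]_m) i j : (i < m)%N -> (j < m.-1)%N ->
  ordf (pf_check phi) (bump i j) i =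
  (-1) ^+ (i + j) * Pn m.-2 (fun x y => ordf phi (bump i (bump j x)) (bump i (bump j y))).
Proof.
move=> hi hj.
have hp : (bump i j < m)%N by have := bump_le i j; nlia.
rewrite -[ordf _ (bump i j) i]/(ordf (pf_check phi) (Ordinal hp) (Ordinal hi)) ordfE mxE /=.
case: (leqP i j) => h.
  have e : bump i j = j.+1 by rewrite /bump h.
  have h1 : (i < bump i j)%N by rewrite e ltnS.
  rewrite ltnNge (ltnW h1) /= h1 (Pf_del2 _ (p := Ordinal hi) (q := Ordinal hp)) //=.
  by rewrite e /= addnS exprS mulN1r mulNr opprK.
have e : bump i j = j by rewrite /bump leqNgt h.
have h1 : (bump i j < i)%N by rewrite e.
rewrite h1 (Pf_del2 _ (p := Ordinal hp) (q := Ordinal hi)) //= e addnC; congr (_ * _).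
apply: Pn_ext_lt => x y _ _.
have ej : unbump j i = i.-1 by rewrite /unbump h subn1.
by rewrite [bump i (bump j x)]bumpC [bump i (bump j y)]bumpC e ej.
Qed.
End H.

Unset Implicit Arguments. Set Strict Implicit. Set Printing Implicit Defensive.

Lemma ring4 (R : comPzRingType) (s x y P : R) : s * x * y * P = y * (s * P) * x.
Proof. by rewrite [s * x * y]mulrAC [s * y * x * P]mulrAC [s * y]mulrC mulrA. Qed.

Theorem mainTheorem7 (R : comPzRingType) (m : nat) (hm : ~~ odd m)
    (phi : 'M[R]_m) (psi : 'M[R]_(3, m)) (Phi : 'M[R]_3)
    (hphi : alternating phi) (hPhi : alternating Phi) (l : 'I_3) :
  let d2 : 'M[R]_(m + 3) := block_mx phi psi^T (- psi) Phi in
  Pfl d2 (rshift m l) =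
    Pfl (psi *m pf_check phi *m psi^T) l + Pf phi * Pfl Phi l.
Proof.
move=> d2.
have hl := ltn_ord l.
have ha : (bump l 0 < 3)%N by have := bump_le l 0; nlia.
have hb : (bump l 1 < 3)%N by have := bump_le l 1; nlia.
have hsign : (-1) ^+ (rshift m l).+2 = (-1) ^+ l.+2 :> R.
  by apply: sign_eq; rewrite /= oddD (negbTE hm).
rewrite /Pfl !Pf_del1 !Pn2 Pf_Pn hsign.
rewrite (_ : (m + 3).-1 = m.+2); last by rewrite addn3.
set oa : 'I_3 := Ordinal ha; set ob : 'I_3 := Ordinal hb.
have hbm : bump (rshift m l) m = (m + oa)%N by rewrite /oa /= -bumpDl addn0.
have hbm1 : bump (rshift m l) m.+1 = (m + ob)%N by rewrite /ob /= -bumpDl addn1.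
have hlow x : (x < m)%N -> bump (rshift m l) x = x.
  move=> hx; rewrite /bump (_ : (rshift m l <= x)%N = false) //.
  by apply/negbTE; rewrite -ltnNge; apply: leq_trans hx (leq_addr _ _).
have hul x y : (x < m)%N -> (y < m)%N ->
    ordf d2 (bump (rshift m l) x) (bump (rshift m l) y) = ordf phi x y.
  move=> hx hy; rewrite !hlow // (ordf_ul phi psi^T (-psi) Phi hx hy).
  exact: esym (ordfE phi (Ordinal hx) (Ordinal hy)).
have hur x (c : 'I_3) : (x < m)%N -> ordf d2 x (m + c)%N = ordf psi c x.
  move=> hx; rewrite (ordf_ur phi psi^T (-psi) Phi c hx) mxE.
  exact: esym (ordfE psi c (Ordinal hx)).
have eO : ordf Phi (bump l 0) (bump l 1) = Phi oa ob by exact: (ordfE Phi oa ob).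
rewrite Pn_last2 mulrDr addrC; congr (_ + _); last first.
  rewrite hbm hbm1 (ordf_dr phi psi^T (-psi) Phi oa ob) eO.
  rewrite (Pn_ext_lt (B' := ordf phi)); last by move=> x y hx hy; apply: hul.
  by rewrite mulrA [RHS]mulrC.
congr (_ * _).
rewrite (ordfE (psi *m pf_check phi *m psi^T) oa ob) mxE; apply: eq_bigr => i _.
rewrite !mxE big_distrl /=.
have hi := ltn_ord i.
set G := fun p : nat => ordf psi oa p * ordf (pf_check phi) p i * ordf psi ob i.
transitivity (\sum_(j < m.-1) G (bump i j)).
  apply: eq_bigr => j _.
  have hj := ltn_ord j.
  have hp : (bump i j < m)%N by have := bump_le i j; nlia.
  rewrite hbm hbm1 (hlow i) // (hlow (bump i j)) // !hur // /G chk_entry //.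
  rewrite (Pn_ext_lt (B' := fun x y => ordf phi (bump i (bump j x)) (bump i (bump j y)))); last first.
    move=> x y hx hy; apply: hul.
      by have := bump_le j x; have := bump_le i (bump j x); nlia.
    by have := bump_le j y; have := bump_le i (bump j y); nlia.
  by apply: ring4.
have G0 : G i = 0 by rewrite /G (ordfE (pf_check phi) i i) /pf_check mxE ltnn mulr0 mul0r.
have hm0 : (0 < m)%N by nlia.
rewrite -[\sum_(j < m.-1) _]addr0 -{2}G0 (sum_bump G) ?prednK //.
by apply: eq_bigr => p _; rewrite /G !ordfE.
Qed.
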